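(* Let $G=(V,E)$ be a finite undirected graph with $V \subset \mathbb{N}$, and let $\mathbf{p}=(p_e)_{e\in E}$ be any collection of probabilities $p_e\in[0,1]$. Let $\vec G(\mathbf{p})$ be the random orientation of $G$ in which each edge $e=\{x,y\}\in E$ with $x<y$ is oriented from $x$ to $y$ with probability $p_e$ and from $y$ to $x$ otherwise, independently over edges, with probability measure $\mathbb{P}_{G,\mathbf{p}}$. For a set $A\subset V$ and a vertex $y$, write $A\rightarrow y$ for the event that for some $x\in A$ there is a directed path from $x$ to $y$ in $\vec G(\mathbf{p})$. Then for any nonempty set $S\subset V$ and any vertices $a,b\in V$, \[\mathbb{P}_{G,\mathbf{p}}(S\rightarrow a \cap S\rightarrow b) \ge \mathbb{P}_{G,\mathbf{p}}(S\rightarrow a)\, \mathbb{P}_{G,\mathbf{p}}(S\rightarrow b).\]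
   Context: A directed path from $x$ to $x$ is taken to exist trivially (the path of length zero), so $S\rightarrow y$ always holds when $y\in S$. *)

(* Defs.v *)
From mathcomp Require Import all_boot all_order all_algebra.
Set Implicit Arguments. Unset Strict Implicit. Unset Printing Implicit Defensive.
Import Order.TTheory GRing.Theory Num.Theory.
Local Open Scope ring_scope.

(* Vertices are natural numbers below some bound N, i.e. elements of 'I_N;
   the vertex set V is a subset of 'I_N (every finite V ⊂ ℕ arises this way).
   An undirected simple graph is given by its edge set E, each edge {x,y}
   with x < y being stored as the ordered pair (x, y).
   An orientation is a boolean function w on pairs: for e = (x,y) ∈ E,
   w e = true means e is oriented x -> y, false means y -> x.
   Values of w outside E are irrelevant; to get a genuine sample space we
   only sum over orientations with w e = false for e ∉ E. *)


Definition is_graph (N : nat) (V : {set 'I_N}) (E : {set 'I_N * 'I_N}) :=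
  forall e, e \in E -> [/\ (e.1 < e.2)%N, e.1 \in V & e.2 \in V].

Definition darc (N : nat) (E : {set 'I_N * 'I_N}) (w : {ffun 'I_N * 'I_N -> bool})
  : rel 'I_N :=
  fun u v => (((u, v) \in E) && w (u, v)) || (((v, u) \in E) && ~~ w (v, u)).

Definition reaches (N : nat) (E : {set 'I_N * 'I_N}) (w : {ffun 'I_N * 'I_N -> bool})
  (S : {set 'I_N}) (y : 'I_N) : bool :=
  [exists x in S, connect (darc E w) x y].

Definition orientation (N : nat) (E : {set 'I_N * 'I_N}) (w : {ffun 'I_N * 'I_N -> bool}) :=
  [forall e, (e \notin E) ==> ~~ w e].

Definition weight (R : realFieldType) (N : nat) (E : {set 'I_N * 'I_N})
  (p : 'I_N * 'I_N -> R) (w : {ffun 'I_N * 'I_N -> bool}) : R :=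
  \prod_(e in E) (if w e then p e else 1 - p e).

Definition Prob (R : realFieldType) (N : nat) (E : {set 'I_N * 'I_N})
  (p : 'I_N * 'I_N -> R) (A : pred {ffun 'I_N * 'I_N -> bool}) : R :=
  \sum_(w | orientation E w && A w) weight E p w.

(* Main.v *)
Require Import Defs.
From mathcomp Require Import all_boot all_order all_algebra.
From mathcomp Require Import ring lra.
Import Order.TTheory GRing.Theory Num.Theory.
Local Open Scope ring_scope.
Set Implicit Arguments. Unset Strict Implicit.

Section Reach.
Variable N : nat.
Implicit Types (E : {set 'I_N * 'I_N}) (w : {ffun 'I_N * 'I_N -> bool}) (S U : {set 'I_N}).

Definition upd w (e : 'I_N * 'I_N) (b : bool) : {ffun 'I_N * 'I_N -> bool} :=
  [ffun x => if x == e then b else w x].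

Definition closedU E w U :=
  [forall u, forall x, (u \in U) && darc E w u x ==> (x \in U)].

Lemma reachesP E w S y :
  reaches E w S y = [forall U : {set 'I_N}, (S \subset U) && closedU E w U ==> (y \in U)].
Proof.
apply/idP/idP.
- case/exists_inP => x xS /connectP [pth Hp ->].
  apply/forallP => U; apply/implyP => /andP [SU cU].
  have: x \in U by exact: (subsetP SU).
  elim: pth x Hp {xS} => [|z pth IH] x //= /andP [hxz Hp] xU.
  apply: IH Hp _.
  by move/forallP: cU => /(_ x)/forallP/(_ z)/implyP; apply; rewrite xU hxz.
- move/forallP/(_ [set z | reaches E w S z])/implyP; rewrite inE; apply.
  apply/andP; split.
    apply/subsetP => z zS; rewrite inE; apply/exists_inP; exists z => //.
  apply/forallP=> u; apply/forallP=> x; apply/implyP=> /andP[].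
  rewrite inE => /exists_inP[z zS czu] hux; rewrite inE; apply/exists_inP.
  by exists z => //; apply: connect_trans czu (connect1 hux).
Qed.

Lemma reaches_ext E w S E' w' S' y :
  (forall U, (S \subset U) && closedU E w U = (S' \subset U) && closedU E' w' U) ->
  reaches E w S y = reaches E' w' S' y.
Proof. by move=> H; rewrite !reachesP; apply: eq_forallb => U; rewrite H. Qed.

Lemma darc1 E w e b u x : darc (E :\ e) w u x -> darc E (upd w e b) u x.
Proof.
rewrite /darc !in_setD1 !ffunE.
case: ((u, x) =P e) => _; case: ((x, u) =P e) => _ /= h; try by [];
  rewrite ?orbF in h; by rewrite h ?orbT.
Qed.

Lemma darc2 E w e b u x : darc E (upd w e b) u x ->
  [|| darc (E :\ e) w u x, ((u, x) == e) && b | ((x, u) == e) && ~~ b].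
Proof.
rewrite /darc !in_setD1 !ffunE.
case: ((u, x) =P e) => _; case: ((x, u) =P e) => _ /= h; try by [];
  move/orP: h => [h|h]; rewrite ?h ?orbT //; case: b h => /=; rewrite ?andbT ?andbF ?orbT //.
Qed.

Lemma closed1 E w e b U : closedU E (upd w e b) U -> closedU (E :\ e) w U.
Proof.
move=> H; apply/forallP => u; apply/forallP => x; apply/implyP => /andP[uU h].
by move/forallP: H => /(_ u)/forallP/(_ x)/implyP; apply; rewrite uU darc1.
Qed.

Lemma reach_fwd E w e b S y s v :
  e \in E -> s \in S ->
  ((e == (s, v)) && b || (e == (v, s)) && ~~ b) ->
  reaches E (upd w e b) S y = reaches (E :\ e) w (v |: S) y.
Proof.
move=> eE sS hb; apply: reaches_ext => U.
apply/idP/idP.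
- case/andP => SU cU; rewrite subUset sub1set SU (closed1 cU) !andbT.
  move/forallP: cU => /(_ s)/forallP/(_ v)/implyP; apply.
  rewrite (subsetP SU) //= /darc !ffunE.
  by case/orP: hb => /andP[/eqP <- hb]; rewrite eqxx eE hb ?orbT.
- rewrite subUset sub1set => /andP[/andP[vU SU] cU]; rewrite SU /=.
  apply/forallP => u; apply/forallP => x; apply/implyP => /andP[uU /darc2 h].
  case/or3P: h => [h|/andP[/eqP he hb']|/andP[/eqP he hb']].
  + by move/forallP: cU => /(_ u)/forallP/(_ x)/implyP; apply; rewrite uU h.
  + move: hb; rewrite -he; case: b hb' => //= _;
    rewrite ?andbT ?andbF ?orbF => /eqP [_ ->] //.
  + move: hb; rewrite -he; case: b hb' => //= _;
    rewrite ?andbT ?andbF ?orbF => /eqP [-> _] //.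
Qed.

Lemma reach_bwd E w e b S y s v :
  s \in S ->
  ((e == (v, s)) && b || (e == (s, v)) && ~~ b) ->
  reaches E (upd w e b) S y = reaches (E :\ e) w S y.
Proof.
move=> sS hb; apply: reaches_ext => U.
apply/idP/idP.
- by case/andP => SU cU; rewrite SU (closed1 cU).
- case/andP => SU cU; rewrite SU /=.
  apply/forallP => u; apply/forallP => x; apply/implyP => /andP[uU /darc2 h].
  case/or3P: h => [h|/andP[/eqP he hb']|/andP[/eqP he hb']].
  + by move/forallP: cU => /(_ u)/forallP/(_ x)/implyP; apply; rewrite uU h.
  + move: hb; rewrite -he; case: b hb' => //= _;
    rewrite ?andbT ?andbF ?orbF => /eqP [_ ->]; exact: (subsetP SU).
  + move: hb; rewrite -he; case: b hb' => //= _;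
    rewrite ?andbT ?andbF ?orbF => /eqP [-> _]; exact: (subsetP SU).
Qed.

Lemma reach_base E w S y :
  (forall e, e \in E -> (e.1 \in S) = (e.2 \in S)) -> reaches E w S y = (y \in S).
Proof.
move=> H; rewrite reachesP; apply/idP/idP.
- move/forallP/(_ S)/implyP; apply; rewrite subxx /=.
  apply/forallP => u; apply/forallP => x; apply/implyP => /andP[uS].
  rewrite /darc => /orP[/andP[/H /= <- _]|/andP[/H /= -> _]] //.
- move=> yS; apply/forallP => U; apply/implyP => /andP[SU _]; exact: (subsetP SU).
Qed.

End Reach.
Section Prob.
Variable R : realFieldType.
Variable N : nat.
Variable p : 'I_N * 'I_N -> R.
Implicit Types (E : {set 'I_N * 'I_N}) (w : {ffun 'I_N * 'I_N -> bool}) (S U : {set 'I_N}).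

Lemma Prob_ext E (A B : pred {ffun 'I_N * 'I_N -> bool}) :
  A =1 B -> Prob E p A = Prob E p B.
Proof. by move=> H; apply: eq_bigl => w; rewrite H. Qed.

Lemma weight_upd E e w b : e \in E ->
  weight E p (upd w e b) = (if b then p e else 1 - p e) * weight (E :\ e) p w.
Proof.
move=> eE; rewrite /weight (bigD1 e) //= ffunE eqxx; congr (_ * _).
apply: eq_big => [i|i /andP[_ ie]]; first by rewrite in_setD1 andbC.
by rewrite ffunE (negbTE ie).
Qed.

Lemma orient_upd E e w b : e \in E ->
  orientation E (upd w e b) && ~~ w e = orientation (E :\ e) w.
Proof.
move=> eE; apply/idP/idP.
- case/andP => /forallP H we; apply/forallP => x; apply/implyP.
  rewrite in_setD1 negb_and negbK; case: (x =P e) => [->|xe] //= xE.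
  by move/implyP: (H x) => /(_ xE); rewrite ffunE; case: eqP.
- move/forallP => H; rewrite andbC.
  move/implyP: (H e); rewrite in_setD1 eqxx /= => -> //=.
  apply/forallP => x; apply/implyP => xE; rewrite ffunE.
  case: (x =P e) => [xe|xe]; first by rewrite xe eE in xE.
  by move/implyP: (H x); apply; rewrite in_setD1 (negbTE xE) andbF.
Qed.

Lemma upd_eq w e b b' : (upd (upd w e b) e b' == w) = (w e == b').
Proof.
apply/eqP/eqP => [<-|we]; first by rewrite !ffunE eqxx.
by apply/ffunP => x; rewrite !ffunE; case: (x =P e) => [->|].
Qed.

Lemma Prob_split E (A : pred {ffun 'I_N * 'I_N -> bool}) e : e \in E ->
  Prob E p A = p e * Prob (E :\ e) p (fun w => A (upd w e true))
             + (1 - p e) * Prob (E :\ e) p (fun w => A (upd w e false)).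
Proof.
move=> eE; rewrite /Prob (bigID (fun w => w e)) /=; congr (_ + _).
- rewrite big_distrr /=.
  rewrite (reindex_onto (fun w => upd w e true) (fun w => upd w e false)) /=.
    apply: eq_big => w.
      rewrite upd_eq ffunE eqxx andbT -(orient_upd _ true eE).
      by case: (w e); rewrite ?andbF ?andbT //= andbC.
    by move=> _; rewrite weight_upd.
  move=> w /andP[_ we]; apply/ffunP => x; rewrite !ffunE.
  by case: (x =P e) => [->|].
- rewrite big_distrr /=.
  rewrite (reindex_onto (fun w => upd w e false) (fun w => upd w e false)) /=.
    apply: eq_big => w.
      rewrite upd_eq ffunE eqxx andbT -(orient_upd _ false eE).
      by case: (w e); rewrite ?andbF ?andbT //= andbC.
    by move=> _; rewrite weight_upd.
  move=> w /andP[_ we]; apply/ffunP => x; rewrite !ffunE.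
  by case: (x =P e) => [->|] //; rewrite (negbTE we).
Qed.

Lemma Prob_false E : Prob E p (fun _ => false) = 0.
Proof. by rewrite /Prob big_pred0 // => w; rewrite andbF. Qed.

Lemma Prob_true E : Prob E p (fun _ => true) = 1.
Proof.
move: {2}#|E| (leqnn #|E|) => n; elim: n E => [|n IH] E hE.
- have E0 : E = set0 by apply/eqP; rewrite -cards_eq0 -leqn0.
  subst E; rewrite /Prob (big_pred1 [ffun => false]).
    by rewrite /weight big_set0.
  move=> w /=; rewrite andbT; apply/forallP/eqP => [H|->].
    by apply/ffunP => x; rewrite ffunE; move/implyP: (H x); rewrite in_set0 => /(_ isT)/negbTE.
  by move=> x; rewrite ffunE implybT.
- case: (set_0Vmem E) => [->|[e eE]].
    by apply: IH; rewrite cards0.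
  rewrite (Prob_split _ eE) !IH; first by rewrite !mulr1 addrC subrK.
  all: by rewrite -ltnS (leq_trans _ hE) // (cardsD1 e E) eE.
Qed.

Lemma weight_ge0 E w : (forall e, e \in E -> 0 <= p e <= 1) -> 0 <= weight E p w.
Proof.
move=> hp; apply: prodr_ge0 => e /hp /andP[h0 h1]; case: (w e) => //.
by rewrite subr_ge0.
Qed.

Lemma Prob_mono E (A B : pred {ffun 'I_N * 'I_N -> bool}) :
  (forall e, e \in E -> 0 <= p e <= 1) -> (forall w, A w -> B w) ->
  Prob E p A <= Prob E p B.
Proof.
move=> hp AB; rewrite /Prob !big_mkcondr /=; apply: ler_sum => w _.
case: (boolP (A w)) => [/AB -> //|_]; case: (B w) => //; exact: weight_ge0.
Qed.

End Prob.
Section Main.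
Variable R : realFieldType.
Variable N : nat.
Variable p : 'I_N * 'I_N -> R.
Implicit Types (E : {set 'I_N * 'I_N}) (w : {ffun 'I_N * 'I_N -> bool}) (S U : {set 'I_N}).

Definition Pr1 E S y := Prob E p (fun w => reaches E w S y).
Definition Pr2 E S a b := Prob E p (fun w => reaches E w S a && reaches E w S b).

Lemma alg (P z1 z2 x1 x2 y1 y2 : R) : 0 <= P -> P <= 1 -> x1 * y1 <= z1 -> x2 * y2 <= z2 ->
  0 <= (x1 - x2) * (y1 - y2) ->
  (P * x1 + (1 - P) * x2) * (P * y1 + (1 - P) * y2) <= P * z1 + (1 - P) * z2.
Proof.
move=> h0 h1 hz1 hz2 hd; rewrite -subr_ge0.
have -> : P * z1 + (1 - P) * z2 - (P * x1 + (1 - P) * x2) * (P * y1 + (1 - P) * y2)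
  = P * (z1 - x1 * y1) + (1 - P) * (z2 - x2 * y2) + (P * (1 - P)) * ((x1 - x2) * (y1 - y2)).
  by ring.
have hP : 0 <= 1 - P by rewrite subr_ge0.
by rewrite !addr_ge0 // mulr_ge0 // ?subr_ge0 // mulr_ge0.
Qed.

Lemma split12 E e S S1 S2 a b : e \in E ->
  (forall w y, reaches E (upd w e true) S y = reaches (E :\ e) w S1 y) ->
  (forall w y, reaches E (upd w e false) S y = reaches (E :\ e) w S2 y) ->
  Pr1 E S a = p e * Pr1 (E :\ e) S1 a + (1 - p e) * Pr1 (E :\ e) S2 a /\
  Pr2 E S a b = p e * Pr2 (E :\ e) S1 a b + (1 - p e) * Pr2 (E :\ e) S2 a b.
Proof.
move=> eE H1 H2; rewrite /Pr1 /Pr2 !(Prob_split _ _ eE); split;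
  by congr (_ * _ + _ * _); apply: Prob_ext => w; rewrite ?H1 ?H2.
Qed.

Lemma Pr1_mono E S v y : (forall e, e \in E -> 0 <= p e <= 1) ->
  Pr1 E S y <= Pr1 E (v |: S) y.
Proof.
move=> hp; apply: Prob_mono => // w /exists_inP [x xS h].
by apply/exists_inP; exists x => //; rewrite inE xS orbT.
Qed.

Lemma main n E : (#|E| <= n)%N -> (forall e, e \in E -> 0 <= p e <= 1) ->
  forall S a b, Pr1 E S a * Pr1 E S b <= Pr2 E S a b.
Proof.
elim: n E => [|n IH] E hE hp S a b.
all: have [/existsP [[x1 x2] /andP[eE hc]] | nc] :=
  boolP [exists e, (e \in E) && ((e.1 \in S) != (e.2 \in S))].
1: by move: hE; rewrite leqn0 cards_eq0 => /eqP E0; rewrite E0 inE in eE.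
2: set e := (x1, x2) in eE hc *.
  2: have hE' : (#|E :\ e| <= n)%N by rewrite -ltnS (leq_trans _ hE) // (cardsD1 e E) eE.
  2: have hp' : forall e', e' \in E :\ e -> 0 <= p e' <= 1
      by move=> e'; rewrite in_setD1 => /andP[_ /hp].
  2: have hpe := hp e eE; case/andP: hpe => hpe0 hpe1.
  2: case h1: (x1 \in S); move: hc; rewrite h1 /=; [move/negbTE => h2 | move/negbNE => h2].
  2: { have f1 : forall w y, reaches E (upd w e true) S y = reaches (E :\ e) w (x2 |: S) y.
         by move=> w y; apply: (@reach_fwd N E w e true S y x1 x2 eE h1); rewrite /e eqxx.
       have f2 : forall w y, reaches E (upd w e false) S y = reaches (E :\ e) w S y.
         by move=> w y; apply: (@reach_bwd N E w e false S y x1 x2 h1); rewrite /e eqxx orbT.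
       have [-> ->] := @split12 E e S (x2 |: S) S a b eE f1 f2.
       have [-> _] := @split12 E e S (x2 |: S) S b a eE f1 f2.
       apply: alg => //; try exact: IH.
       by apply: mulr_ge0; rewrite subr_ge0 Pr1_mono. }
  2: { have f1 : forall w y, reaches E (upd w e true) S y = reaches (E :\ e) w S y.
         by move=> w y; apply: (@reach_bwd N E w e true S y x2 x1 h2); rewrite /e eqxx.
       have f2 : forall w y, reaches E (upd w e false) S y = reaches (E :\ e) w (x1 |: S) y.
         by move=> w y; apply: (@reach_fwd N E w e false S y x2 x1 eE h2); rewrite /e eqxx orbT.
       have [-> ->] := @split12 E e S S (x1 |: S) a b eE f1 f2.
       have [-> _] := @split12 E e S S (x1 |: S) b a eE f1 f2.
       apply: alg => //; try exact: IH.
       rewrite -mulrNN !opprB; by apply: mulr_ge0; rewrite subr_ge0 Pr1_mono. }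
all: have hb : forall e, e \in E -> (e.1 \in S) = (e.2 \in S)
  by move=> e eE; apply/eqP/negPn; apply: contra nc => h; apply/existsP; exists e; rewrite eE h.
all: have ea : forall y, Pr1 E S y = Prob E p (fun _ => y \in S)
  by move=> y; apply: Prob_ext => w; rewrite reach_base.
all: have eab : Pr2 E S a b = Prob E p (fun _ => (a \in S) && (b \in S))
  by apply: Prob_ext => w; rewrite !reach_base.
all: rewrite !ea eab.
all: by case: (a \in S); case: (b \in S); rewrite /= ?Prob_true ?Prob_false ?mulr1 ?mul0r ?mulr0.
Qed.

End Main.
Unset Implicit Arguments.

Theorem theorem3 (R : realFieldType) (N : nat) (V : {set 'I_N})
  (E : {set 'I_N * 'I_N}) (p : 'I_N * 'I_N -> R)
  (S : {set 'I_N}) (a b : 'I_N) :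
  is_graph V E ->
  (forall e, e \in E -> 0 <= p e <= 1) ->
  S \subset V -> S != set0 -> a \in V -> b \in V ->
  Prob E p (fun w => reaches E w S a && reaches E w S b)
    >= Prob E p (fun w => reaches E w S a) * Prob E p (fun w => reaches E w S b).
Proof.
move=> _ hp _ _ _ _.
exact: (@main R N p #|E| E (leqnn _) hp S a b).
Qed.
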